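(* Let $\lambda$ be a partition with $n$ parts and let $\beta$ be an upper $\lambda$-tuple, i.e. $\beta \in U_\lambda(n)$. Then the terminal pair $(\lambda,\beta)$ is nonpermutable if and only if $\beta$ is a gapless core $\lambda$-tuple that is bounded by its platform, i.e. if and only if $\beta \in UGC_\lambda(n) \cap UBP_\lambda(n)$.
   Context: Fix an integer $n \geq 1$ and write $[k] = \{1,\dots,k\}$ and $(a,b] = \{a+1,\dots,b\}$. A partition is $\lambda = (\lambda_1,\dots,\lambda_n)$ with $\lambda_1 \geq \dots \geq \lambda_n \geq 0$ integers. Let $R_\lambda \subseteq [n-1]$ be the set of $q \in [n-1]$ with $\lambda_q > \lambda_{q+1}$ (equivalently, the set of distinct column lengths of the Young diagram of $\lambda$ that are less than $n$); write its elements $q_1 < \dots < q_r$ ($r \geq 0$), and set $q_0 := 0$, $q_{r+1} := n$. For $h \in [r+1]$ the $h$-th carrel is the index interval $(q_{h-1}, q_h]$. A $\lambda$-tuple is an $n$-tuple $\beta = (\beta_1,\dots,\beta_n)$ with entries in $[n]$, considered together with this carrel structure; it is upper if $\beta_i \geq i$ for all $i \in [n]$. $U_\lambda(n)$ denotes the set of upper $\lambda$-tuples, partially ordered entrywise. Critical indices: let $\beta \in U_\lambda(n)$ and $h \in [r+1]$. Set $x_1 := q_h$. Recursively, given $x_{u-1}$, if there is an index $x$ with $q_{h-1} < x < x_{u-1}$ and $\beta_{x_{u-1}} - \beta_x > x_{u-1} - x$, let $x_u$ be the largest such $x$; otherwise stop. The indices $x_1 > x_2 > \cdots$ so obtained are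 the critical indices of $\beta$ in the $h$-th carrel; the pairs $(x_u, \beta_{x_u})$ are its critical pairs, and the sequence over $h$ of the sets of critical pairs is the critical list of $\beta$. For $i \in [n]$ let $x(i)$ be the smallest critical index of $\beta$ lying in the carrel containing $i$ with $x(i) \geq i$. The $\lambda$-platform of $\beta$ is $\Xi_\lambda(\beta) := \xi$ with $\xi_i := \beta_{x(i)}$ for $i \in [n]$. The critical list of $\beta$ is a flag critical list if for every $h \in [r]$ one has $\beta_{q_h} \leq \beta_k$, where $k$ is the smallest critical index of $\beta$ in the $(h+1)$-st carrel. $UGC_\lambda(n)$ (gapless core $\lambda$-tuples) is the set of $\beta \in U_\lambda(n)$ whose critical list is a flag critical list. $UBP_\lambda(n)$ (tuples bounded by their platform) is the set of $\beta \in U_\lambda(n)$ with $\beta_i \leq \Xi_\lambda(\beta)_i$ for all $i$. Lattice paths: lattice points are pairs $(a,b)$ of integers with $a \geq 0$, $b \geq 1$ (think of $a$ as the eastward coordinate and $b$ as the southward depth). A lattice path is a sequence of lattice points in which each consecutive step is either an easterly step $(a,b) \to (a+1,b)$ or a southerly step $(a,b) \to (a,b+1)$. An $n$-path is an $n$-tuple $(\Lambda_1,\dots,\Lambda_n)$ of lattice paths such that $\Lambda_m$ starts at $(n-m, m)$ for $m \in [n]$. Given $\beta \in U_\lambda(n)$, the terminals are the points $P_m := (\lambda_m + n - m, \beta_m)$, $m \in [n]$. For a permutation $\pi$ of $[n]$, let $\mathcal{LD}_\lambda(\beta;\pi)$ be the set of $n$-paths in which $\Lambda_m$ ends at $P_{\pi_m}$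 for each $m$ and no two distinct components share a lattice point. The terminal pair $(\lambda,\beta)$ is nonpermutable if $\mathcal{LD}_\lambda(\beta;\pi) = \emptyset$ for every permutation $\pi \neq (1,2,\dots,n)$. *)

(* Defs.v *)
(* All tuples are 1-based: lam, beta : nat -> nat,
   only the values at indices 1..n are relevant. *)
From mathcomp Require Import all_boot.
Set Implicit Arguments. Unset Strict Implicit. Unset Printing Implicit Defensive.

Definition is_partition (n : nat) (lam : nat -> nat) : Prop :=
  forall i, 1 <= i -> i < n -> lam i.+1 <= lam i.

Definition is_upper_tuple (n : nat) (beta : nat -> nat) : Prop :=
  forall i, 1 <= i <= n -> (1 <= beta i <= n) /\ i <= beta i.

Definition Rset (n : nat) (lam : nat -> nat) : seq nat :=
  [seq q <- iota 1 n.-1 | lam q.+1 < lam q].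

Definition qlist (n : nat) (lam : nat -> nat) : seq nat :=
  0 :: rcons (Rset n lam) n.

Definition qq (n : nat) (lam : nat -> nat) (h : nat) : nat := nth 0 (qlist n lam) h.

Definition rr (n : nat) (lam : nat -> nat) : nat := size (Rset n lam).

(* Critical indices in the carrel (a, b]: starting from x, the next one is the
   largest y with a < y < x and beta_x - beta_y > x - y.  The fuel argument only
   guarantees termination (the sequence strictly decreases, fuel = b suffices). *)
Fixpoint crit_from (beta : nat -> nat) (a x fuel : nat) : seq nat :=
  match fuel with
  | 0 => [:: x]
  | f.+1 =>
    let cand := [seq y <- iota a.+1 (x - a.+1) | beta y + (x - y) < beta x] in
    if cand is _ :: _ then x :: crit_from beta a (last 0 cand) f else [:: x]
  end.

Definition crit_carrel (beta : nat -> nat) (a b : nat) : seq nat :=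
  crit_from beta a b b.

Definition crit_h (n : nat) (lam beta : nat -> nat) (h : nat) : seq nat :=
  crit_carrel beta (qq n lam h.-1) (qq n lam h).

Definition carrel_lo (n : nat) (lam : nat -> nat) (i : nat) : nat :=
  last 0 [seq q <- qlist n lam | q < i].
Definition carrel_hi (n : nat) (lam : nat -> nat) (i : nat) : nat :=
  head n [seq q <- qlist n lam | i <= q].

Definition xcrit (n : nat) (lam beta : nat -> nat) (i : nat) : nat :=
  let b := carrel_hi n lam i in
  foldr minn b [seq x <- crit_carrel beta (carrel_lo n lam i) b | i <= x].

Definition platform (n : nat) (lam beta : nat -> nat) (i : nat) : nat :=
  beta (xcrit n lam beta i).

Definition flag_critical (n : nat) (lam beta : nat -> nat) : Prop :=
  forall h, 1 <= h <= rr n lam ->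
    beta (qq n lam h) <=
    beta (foldr minn (qq n lam h.+1) (crit_h n lam beta h.+1)).

(* beta in UGC_lambda(n) (beta is assumed upper) *)
Definition gapless_core (n : nat) (lam beta : nat -> nat) : Prop :=
  flag_critical n lam beta.

Definition bounded_by_platform (n : nat) (lam beta : nat -> nat) : Prop :=
  forall i, 1 <= i <= n -> beta i <= platform n lam beta i.

Definition lstep (p q : nat * nat) : bool :=
  (q == (p.1.+1, p.2)) || (q == (p.1, p.2.+1)).

Definition lattice_path (s : seq (nat * nat)) : bool :=
  if s is x :: s' then path lstep x s' && all (fun p => 1 <= p.2) s else false.

Definition is_perm_n (n : nat) (pi : nat -> nat) : Prop :=
  (forall m, 1 <= m <= n -> 1 <= pi m <= n) /\
  (forall m m', 1 <= m <= n -> 1 <= m' <= n -> pi m = pi m' -> m = m').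

Definition terminal (n : nat) (lam beta : nat -> nat) (m : nat) : nat * nat :=
  (lam m + n - m, beta m).

Definition in_LD (n : nat) (lam beta pi : nat -> nat)
    (Lam : nat -> seq (nat * nat)) : Prop :=
  (forall m, 1 <= m <= n ->
     [/\ lattice_path (Lam m),
         head (0, 0) (Lam m) = (n - m, m) &
         last (0, 0) (Lam m) = terminal n lam beta (pi m)]) /\
  (forall m m', 1 <= m <= n -> 1 <= m' <= n -> m <> m' ->
     forall p, p \in Lam m -> p \notin Lam m').

Definition nonpermutable (n : nat) (lam beta : nat -> nat) : Prop :=
  forall pi, is_perm_n n pi -> (exists2 m, 1 <= m <= n & pi m <> m) ->
    ~ exists Lam, in_LD n lam beta pi Lam.

(* Main.v *)
Require Import Defs.
From mathcomp Require Import all_boot zify.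
From Stdlib Require Import Lia Classical IndefiniteDescription.
Set Implicit Arguments. Unset Strict Implicit. Unset Printing Implicit Defensive.

Lemma sorted_le_last (s : seq nat) x0 y :
  sorted leq s -> y \in s -> y <= last x0 s.
Proof.
elim: s x0 => [|a s IH] x0 //= Hs.
rewrite inE => /orP [/eqP -> | Hy].
- have Ha := order_path_min leq_trans Hs.
  have := mem_last a s; rewrite inE => /orP [/eqP -> //| Hl].
  by move/allP: Ha => /(_ _ Hl).
- by apply: IH => //; exact: path_sorted Hs.
Qed.

Lemma sorted_head_le (s : seq nat) x0 y :
  sorted leq s -> y \in s -> head x0 s <= y.
Proof.
case: s => [|a s] //= Hs; rewrite inE => /orP [/eqP -> //| Hy].
have Ha := order_path_min leq_trans Hs.
by move/allP: Ha => /(_ _ Hy).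
Qed.

Lemma last_in (s : seq nat) x0 : s != [::] -> last x0 s \in s.
Proof. by case: s => [|a s] //= _; exact: mem_last. Qed.

Lemma foldr_minn_le d (s : seq nat) y : y \in s -> foldr minn d s <= y.
Proof.
elim: s => [|a s IH] //=; rewrite inE => /orP [/eqP ->| Hy]; first by rewrite geq_minl.
by rewrite geq_min IH ?orbT.
Qed.

Lemma foldr_minn_led d (s : seq nat) : foldr minn d s <= d.
Proof. elim: s => [|a s IH] //=; by rewrite geq_min IH orbT. Qed.

Lemma foldr_minn_mem d (s : seq nat) : foldr minn d s \in d :: s.
Proof.
elim: s => [|a s IH] /=; first by rewrite inE.
rewrite /minn; case: ifP => _; first by rewrite !inE eqxx orbT.
move: IH; rewrite !inE => /orP [->//|->]; by rewrite !orbT.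
Qed.

Lemma partition_mono n lam i i' :
  is_partition n lam -> 1 <= i -> i <= i' -> i' <= n -> lam i' <= lam i.
Proof.
move=> Hp Hi Hii'; elim: i' Hii' => [|i' IH] Hle Hn; first lia.
case: (ltnP i i'.+1) => H.
- have := Hp i' ltac:(lia) ltac:(lia). have := IH ltac:(lia) ltac:(lia). lia.
- have -> : i'.+1 = i by lia. done.
Qed.

Lemma mem_Rset n lam q :
  (q \in Rset n lam) = [&& 0 < q, q < n & lam q.+1 < lam q].
Proof.
rewrite /Rset mem_filter mem_iota.
case: n => [|n] /=; apply/idP/idP; lia.
Qed.

Lemma mem_qlist n lam q :
  (q \in qlist n lam) = [|| q == 0, q == n | q \in Rset n lam].
Proof. by rewrite /qlist inE mem_rcons inE. Qed.

Lemma qlist_le_n n lam z : z \in qlist n lam -> z <= n.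
Proof. rewrite mem_qlist mem_Rset; case/or3P => [/eqP->|/eqP->|]; lia. Qed.

Lemma sorted_qlist n lam : 0 < n -> sorted ltn (qlist n lam).
Proof.
move=> Hn; rewrite /qlist /= rcons_path.
have HR : sorted ltn (Rset n lam) by apply: sorted_filter; [exact: ltn_trans| exact: iota_ltn_sorted].
rewrite (path_sortedE ltn_trans) HR andbT; apply/andP; split.
- apply/allP => q; rewrite mem_Rset; lia.
- case E: (Rset n lam) => [|a s] //=.
  have : last a s \in Rset n lam by rewrite E; exact: mem_last.
  rewrite mem_Rset; lia.
Qed.

Lemma sorted_qlist_leq n lam : 0 < n -> sorted leq (qlist n lam).
Proof. move=> Hn; apply: (sub_sorted _ (sorted_qlist lam Hn)) => x y; exact: ltnW. Qed.

Definition carrel n lam a b :=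
  [/\ a \in qlist n lam, b \in qlist n lam, a < b &
      forall z, z \in qlist n lam -> ~~ ((a < z) && (z < b))].

Lemma carrel_le_n n lam a b : carrel n lam a b -> b <= n.
Proof. by case=> _ Hb _ _; exact: qlist_le_n Hb. Qed.

Lemma carrel_const n lam a b : is_partition n lam -> carrel n lam a b ->
  forall y, a < y -> y < b -> lam y.+1 = lam y.
Proof.
move=> Hp [Ha Hb Hab Hz] y H1 H2.
have Hbn := qlist_le_n Hb.
have Hy : y \notin qlist n lam by apply/negP => /Hz; rewrite H1 H2.
move: Hy; rewrite mem_qlist mem_Rset => Hy.
have := Hp y ltac:(lia) ltac:(lia).
move: Hy; case: (ltnP (lam y.+1) (lam y)); lia.
Qed.

Lemma carrel_const2 n lam a b : is_partition n lam -> carrel n lam a b ->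
  forall l, a < l -> l <= b -> lam b = lam l.
Proof.
move=> Hp Hc l Hl; move Hd: (b - l) => d; elim: d l Hl Hd => [|d IH] l Hl Hd Hlb.
- by have -> : b = l by lia.
- rewrite (IH l.+1) ?(carrel_const Hp Hc) //; lia.
Qed.

Lemma carrel_drop n lam a b : carrel n lam a b -> b < n -> lam b.+1 < lam b.
Proof.
case=> _ Hb Hab _ Hbn; move: Hb; rewrite mem_qlist mem_Rset.
case/or3P => [/eqP|/eqP|]; lia.
Qed.

Lemma carrel_same n lam a b l y : is_partition n lam -> carrel n lam a b ->
  a < l -> l <= b -> l < y -> y <= n -> lam y = lam l -> y <= b.
Proof.
move=> Hp Hc Hal Hlb Hly Hyn Hlam; case: (leqP y b) => // Hby.
have Hbn : b < n by lia.
have := carrel_drop Hc Hbn.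
have := carrel_const2 Hp Hc Hal Hlb.
have Hb1 : 1 <= b.+1 by lia.
have := partition_mono Hp Hb1 Hby Hyn.
lia.
Qed.

Lemma lo_spec n lam i : 0 < n -> 1 <= i ->
  let lo := carrel_lo n lam i in
  [/\ lo \in qlist n lam, lo < i &
      forall z, z \in qlist n lam -> z < i -> z <= lo].
Proof.
move=> Hn Hi /=; rewrite /carrel_lo.
set F := [seq q <- qlist n lam | q < i].
have HF : sorted leq F by apply: sorted_filter; [exact: leq_trans| exact: sorted_qlist_leq].
have H0 : 0 \in F by rewrite mem_filter mem_qlist eqxx /=; lia.
have Hne : F != [::] by apply/negP => /eqP E; rewrite E in H0.
have := last_in 0 Hne; rewrite mem_filter => /andP [Hlt Hin].
split => // z Hz Hzi; apply: sorted_le_last => //; by rewrite mem_filter Hzi.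
Qed.

Lemma hi_spec n lam i : 0 < n -> i <= n ->
  let hi := carrel_hi n lam i in
  [/\ hi \in qlist n lam, i <= hi &
      forall z, z \in qlist n lam -> i <= z -> hi <= z].
Proof.
move=> Hn Hi /=; rewrite /carrel_hi.
set F := [seq q <- qlist n lam | i <= q].
have HF : sorted leq F by apply: sorted_filter; [exact: leq_trans| exact: sorted_qlist_leq].
have H0 : n \in F by rewrite mem_filter mem_qlist eqxx orbT Hi.
case E: F => [|a s]; first by rewrite E in H0.
have : a \in F by rewrite E inE eqxx.
rewrite mem_filter => /andP [Hia Ha] /=.
split => // z Hz Hiz.
have -> : a = head n F by rewrite E.
apply: sorted_head_le => //; by rewrite mem_filter Hiz.
Qed.

Lemma carrel_lohi n lam i : 0 < n -> 1 <= i -> i <= n ->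
  carrel n lam (carrel_lo n lam i) (carrel_hi n lam i) /\
  carrel_lo n lam i < i <= carrel_hi n lam i.
Proof.
move=> Hn H1 H2.
have [Hl1 Hl2 Hl3] := lo_spec lam Hn H1.
have [Hh1 Hh2 Hh3] := hi_spec lam Hn H2.
split; last lia.
split => //; first lia.
move=> z Hz; apply/negP => /andP [Ha Hb].
case: (ltnP z i) => Hzi.
- have := Hl3 z Hz Hzi; lia.
- have := Hh3 z Hz Hzi; lia.
Qed.

Lemma carrel_uniq n lam a b i : 0 < n -> carrel n lam a b -> a < i -> i <= b ->
  carrel_lo n lam i = a /\ carrel_hi n lam i = b.
Proof.
move=> Hn [Ha Hb Hab Hz] H1 H2.
have Hbn := qlist_le_n Hb.
have Hi1 : 1 <= i by lia.
have Hin : i <= n by lia.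
have [Hl1 Hl2 Hl3] := lo_spec lam Hn Hi1.
have [Hh1 Hh2 Hh3] := hi_spec lam Hn Hin.
have := Hl3 a Ha H1; have := Hh3 b Hb H2.
have := Hz _ Hl1; have := Hz _ Hh1.
lia.
Qed.

Lemma size_qlist n lam : size (qlist n lam) = (rr n lam).+2.
Proof. by rewrite /qlist /= size_rcons. Qed.

Lemma qq0 n lam : qq n lam 0 = 0.
Proof. by []. Qed.

Lemma qq_last n lam : qq n lam (rr n lam).+1 = n.
Proof. by rewrite /qq /qlist /= nth_rcons ltnn eqxx. Qed.

Lemma qq_mem n lam h : h <= (rr n lam).+1 -> qq n lam h \in qlist n lam.
Proof. move=> H; apply: mem_nth; rewrite size_qlist; lia. Qed.

Lemma qq_lt n lam h h' : 0 < n -> h < h' -> h' <= (rr n lam).+1 -> qq n lam h < qq n lam h'.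
Proof.
move=> Hn H1 H2; apply: (sorted_ltn_nth ltn_trans 0 (sorted_qlist lam Hn)) => //;
rewrite inE size_qlist; lia.
Qed.

Lemma qq_le n lam h h' : 0 < n -> h <= h' -> h' <= (rr n lam).+1 -> qq n lam h <= qq n lam h'.
Proof.
move=> Hn H1 H2; apply: (sorted_leq_nth leq_trans leqnn 0 (sorted_qlist_leq lam Hn)) => //;
rewrite inE size_qlist; lia.
Qed.

Lemma carrel_qq n lam h : 0 < n -> h <= rr n lam ->
  carrel n lam (qq n lam h) (qq n lam h.+1).
Proof.
move=> Hn Hh; split; [apply: qq_mem; lia| apply: qq_mem; lia| apply: qq_lt; lia|].
move=> z Hz; apply/negP => /andP [H1 H2].
have Hk : index z (qlist n lam) < (rr n lam).+2 by rewrite -size_qlist index_mem.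
have Ez : qq n lam (index z (qlist n lam)) = z by rewrite /qq nth_index.
case: (leqP (index z (qlist n lam)) h) => Hk2.
- have Hh' : h <= (rr n lam).+1 by lia.
  have := qq_le Hn Hk2 Hh'; rewrite Ez; lia.
- have Hh' : index z (qlist n lam) <= (rr n lam).+1 by lia.
  have := qq_le Hn Hk2 Hh'; rewrite Ez; lia.
Qed.

Lemma qlist_index n lam q : 0 < n -> q \in qlist n lam -> 0 < q -> q < n ->
  exists h, [/\ 1 <= h, h <= rr n lam & qq n lam h = q].
Proof.
move=> Hn Hq H0 H1; exists (index q (qlist n lam)).
have Hk : index q (qlist n lam) < (rr n lam).+2 by rewrite -size_qlist index_mem.
have Ez : qq n lam (index q (qlist n lam)) = q by rewrite /qq nth_index.
move: Ez Hk; set k := index q (qlist n lam) => Ez Hk.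
split.
- move: Ez Hk; case: k => [|k]; last lia. rewrite qq0; lia.
- case E: (k == (rr n lam).+1).
  + move/eqP: E Ez => ->; rewrite qq_last; lia.
  + move/negbT: E; lia.
- done.
Qed.

Lemma crit_from_mem beta a : forall f x z, a < x -> x - a <= f ->
  (z \in crit_from beta a x f) <->
  (a < z <= x /\ forall y, z < y <= x -> beta z + (y - z) < beta y).
Proof.
elim=> [|f IH] x z Hax Hf; first lia.
rewrite /=.
set cand := [seq y <- iota a.+1 (x - a.+1) | beta y + (x - y) < beta x].
have Hcand : forall y, y \in cand = (a < y < x) && (beta y + (x - y) < beta x).
  move=> y; rewrite mem_filter mem_iota andbC; congr (_ && _); apply/idP/idP; lia.
case E: cand => [|c0 cs].
- rewrite inE; split.
  + move/eqP=> ->; split; [lia| move=> y; lia].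
  + move=> [Hz Hy]; apply/eqP; case: (ltnP z x) => Hzx; last lia.
    have : z \in cand by rewrite Hcand; have := Hy x; lia.
    by rewrite E.
- set x' := last 0 (c0 :: cs).
  have Hx' : x' \in cand by rewrite E /x'; exact: mem_last.
  have Hmax : forall y, y \in cand -> y <= x'.
    move=> y Hy; rewrite /x' -E; apply: sorted_le_last => //.
    apply: sorted_filter; [exact: leq_trans| exact: iota_sorted].
  move: (Hx'); rewrite Hcand => /andP [/andP [Hax' Hx'x] Hbx'].
  have IH' := IH x' z Hax' ltac:(lia).
  rewrite inE; split.
  + case/orP => [/eqP ->|/IH' [Hz Hy]]; first by split; [lia| move=> y; lia].
    split; first lia.
    move=> y Hy2.
    case: (leqP y x') => Hyx'; first by apply: Hy; lia.
    have Hny : a < y -> y < x -> ~~ (y \in cand) -> beta x <= beta y + (x - y).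
      move=> ? ?; rewrite Hcand; case: (ltnP (beta y + (x - y)) (beta x)); lia.
    have Hzx' : beta z + (x' - z) <= beta x'.
      case: (ltnP z x') => Hzx'; first by have := Hy x'; lia.
      have -> : z = x' by lia. lia.
    case: (ltnP y x) => Hyx.
    * have : ~~ (y \in cand) by apply/negP => /Hmax; lia.
      move/(Hny ltac:(lia) Hyx); lia.
    * have -> : y = x by lia. lia.
  + move=> [Hz Hy]; case: (eqVneq z x) => [->|Hzx]; first by apply/orP; left.
    apply/orP; right; apply/IH'.
    have Hzc : z \in cand by rewrite Hcand; have := Hy x; lia.
    have := Hmax _ Hzc => Hzx'.
    split; first lia.
    move=> y Hy2; apply: Hy; lia.
Qed.

Definition critP (beta : nat -> nat) a b z :=
  a < z <= b /\ forall y, z < y <= b -> beta z + (y - z) < beta y.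

Lemma crit_carrel_mem beta a b z : a < b ->
  (z \in crit_carrel beta a b) <-> critP beta a b z.
Proof. move=> Hab; rewrite /crit_carrel crit_from_mem //; lia. Qed.

Lemma crit_hi beta a b : a < b -> b \in crit_carrel beta a b.
Proof. move=> Hab; rewrite crit_carrel_mem //; split; [lia| move=> y; lia]. Qed.

Lemma crit_mono beta a b z z' : a < b -> z \in crit_carrel beta a b ->
  z' \in crit_carrel beta a b -> z <= z' -> beta z <= beta z'.
Proof.
move=> Hab /(crit_carrel_mem _ _ Hab) [H1 H2] /(crit_carrel_mem _ _ Hab) [H3 H4] Hzz.
case: (ltnP z z') => H; first by have := H2 z'; lia.
have -> : z = z' by lia. done.
Qed.

Lemma xcrit_spec n lam beta i : 0 < n -> 1 <= i -> i <= n ->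
  let lo := carrel_lo n lam i in let hi := carrel_hi n lam i in
  [/\ xcrit n lam beta i \in crit_carrel beta lo hi, i <= xcrit n lam beta i &
     forall z, z \in crit_carrel beta lo hi -> i <= z -> xcrit n lam beta i <= z].
Proof.
move=> Hn H1 H2 lo hi.
have [Hc Hbd] := carrel_lohi lam Hn H1 H2.
have Hlh : lo < hi by lia.
rewrite /xcrit -/lo -/hi.
set F := [seq x <- crit_carrel beta lo hi | i <= x].
have := foldr_minn_mem hi F; rewrite inE => /orP [/eqP E| HF].
- rewrite E; split; [exact: crit_hi| lia|].
  move=> z Hz Hiz; rewrite -E; apply: foldr_minn_le; by rewrite mem_filter Hiz.
- move: (HF); rewrite mem_filter => /andP [Hi Hin]; split => //.
  move=> z Hz Hiz; apply: foldr_minn_le; by rewrite mem_filter Hiz.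
Qed.

Lemma platform_crit n lam beta l : 0 < n -> 1 <= l -> l <= n ->
  l \in crit_carrel beta (carrel_lo n lam l) (carrel_hi n lam l) ->
  platform n lam beta l = beta l.
Proof.
move=> Hn H1 H2 Hl; rewrite /platform.
have [Ha Hb Hc] := xcrit_spec lam beta Hn H1 H2.
have := Hc l Hl (leqnn l).
by move=> H; congr beta; apply/eqP; rewrite eqn_leq H Hb.
Qed.

Lemma plat_step n lam beta i : 0 < n -> is_partition n lam -> flag_critical n lam beta ->
  1 <= i -> i < n -> platform n lam beta i <= platform n lam beta i.+1.
Proof.
move=> Hn Hp Hf H1 H2.
have H2' : i <= n by lia.
have H1' : 1 <= i.+1 by lia.
have [Hc Hbd] := carrel_lohi lam Hn H1 H2'.
set lo := carrel_lo n lam i in Hc Hbd *.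
set hi := carrel_hi n lam i in Hc Hbd *.
have Hlh : lo < hi by lia.
have [Xa Xb Xc] := xcrit_spec lam beta Hn H1 H2'.
have [Ya Yb Yc] := xcrit_spec lam beta Hn H1' H2.
case: (ltnP i hi) => Hih.
- have Hl1 : lo < i.+1 by lia.
  have [E1 E2] := carrel_uniq Hn Hc Hl1 Hih.
  rewrite E1 E2 -/lo -/hi in Ya Yb Yc.
  rewrite /platform; apply: (crit_mono Hlh Xa Ya).
  apply: Xc => //; lia.
- have Ehi : hi = i by lia.
  have Hiq : i \in qlist n lam by case: Hc => _ Hb _ _; rewrite Ehi in Hb.
  have Hi0 : 0 < i by lia.
  have [h [Hh1 Hh2 Hh3]] := qlist_index Hn Hiq Hi0 H2.
  have Hc2 := carrel_qq Hn Hh2.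
  rewrite Hh3 in Hc2.
  have Hi2 : i.+1 <= qq n lam h.+1 by case: Hc2.
  have [E1 E2] := carrel_uniq Hn Hc2 (ltnSn i) Hi2.
  have Hpi : platform n lam beta i = beta i.
    rewrite /platform; congr beta; apply/eqP; rewrite eqn_leq Xb andbT.
    have Hcr : i \in crit_carrel beta lo hi by rewrite crit_carrel_mem //; split; [lia| move=> y; lia].
    exact: Xc Hcr (leqnn i).
  rewrite Hpi.
  have Hh : 1 <= h <= rr n lam by lia.
  have := Hf h Hh; rewrite Hh3 /crit_h /=.
  rewrite /platform /xcrit E1 E2.
  have Hall : all (fun x => i.+1 <= x) (crit_carrel beta i (qq n lam h.+1)).
    have Hlt2 : i < qq n lam h.+1 by case: Hc2.
    apply/allP => x /(crit_carrel_mem _ _ Hlt2) [Hx _]; lia.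
  by rewrite (all_filterP Hall) Hh3.
Qed.

Lemma plat_mono n lam beta i i' : 0 < n -> is_partition n lam -> flag_critical n lam beta ->
  1 <= i -> i <= i' -> i' <= n -> platform n lam beta i <= platform n lam beta i'.
Proof.
move=> Hn Hp Hf H1; elim: i' => [|i' IH] H2 H3; first lia.
case: (ltnP i i'.+1) => H.
- apply: leq_trans (IH ltac:(lia) ltac:(lia)) _; apply: plat_step => //; lia.
- by have -> : i'.+1 = i by lia.
Qed.

Definition Dcond n (lam beta : nat -> nat) := exists i l,
  [/\ 1 <= i, i < l, l <= n, beta l < beta i &
      forall y, l < y -> y <= n -> lam y = lam l -> beta l + (y - l) < beta y].

Theorem cond_notD n lam beta : 0 < n -> is_partition n lam ->
  gapless_core n lam beta -> bounded_by_platform n lam beta -> ~ Dcond n lam beta.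
Proof.
move=> Hn Hp Hg Hb [i [l [H1 H2 H3 H4 HB]]].
have Hl1 : 1 <= l by lia.
have [Hc Hbd] := carrel_lohi lam Hn Hl1 H3.
have Hlh : carrel_lo n lam l < carrel_hi n lam l by lia.
have Hcr : l \in crit_carrel beta (carrel_lo n lam l) (carrel_hi n lam l).
  rewrite crit_carrel_mem //; split; first lia.
  move=> y Hy; apply: HB; try lia.
  - have := carrel_le_n Hc; lia.
  - have Hlo : carrel_lo n lam l < l by lia.
    have Hly : carrel_lo n lam l < y by lia.
    rewrite -(carrel_const2 Hp Hc Hlo) ?(carrel_const2 Hp Hc Hly) //; lia.
have Epl := platform_crit Hn Hl1 H3 Hcr.
have := Hb i ltac:(lia).
have := plat_mono Hn Hp Hg H1 (ltnW H2) H3.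
lia.
Qed.

Theorem notD_cond n lam beta : 0 < n -> is_partition n lam ->
  ~ Dcond n lam beta -> gapless_core n lam beta /\ bounded_by_platform n lam beta.
Proof.
move=> Hn Hp HD; split.
- move=> h /andP [Hh1 Hh2]; rewrite leqNgt; apply/negP => Hlt; apply: HD.
  have Hc := carrel_qq (lam:=lam) Hn Hh2.
  have [Ha Hb Hab Hz] := Hc.
  rewrite /crit_h /= in Hlt.
  set k := foldr minn _ _ in Hlt.
  have Hk : k \in crit_carrel beta (qq n lam h) (qq n lam h.+1).
    have := foldr_minn_mem (qq n lam h.+1) (crit_carrel beta (qq n lam h) (qq n lam h.+1)).
    rewrite inE => /orP [/eqP E|//]; rewrite /k E; exact: crit_hi.
  move: (Hk) => /(crit_carrel_mem _ _ Hab) [Hk1 Hk2].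
  have Hbn := qlist_le_n Hb.
  have Hq1 : 0 < qq n lam h.
    have Hh3 : h <= (rr n lam).+1 by lia.
    by have := qq_lt (lam:=lam) Hn Hh1 Hh3; rewrite qq0.
  exists (qq n lam h), k; split => //; try lia.
  move=> y Hy1 Hy2 Hy3; apply: Hk2.
  have Hk3 : qq n lam h < k by lia.
  have Hk4 : k <= qq n lam h.+1 by lia.
  have := carrel_same Hp Hc Hk3 Hk4 Hy1 Hy2 Hy3.
  lia.
- move=> i /andP [Hi1 Hi2]; rewrite leqNgt; apply/negP => Hlt; apply: HD.
  have [Xa Xb Xc] := xcrit_spec lam beta Hn Hi1 Hi2.
  have [Hc Hbd] := carrel_lohi lam Hn Hi1 Hi2.
  have Hlh : carrel_lo n lam i < carrel_hi n lam i by lia.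
  move: (Xa) => /(crit_carrel_mem _ _ Hlh) [Hk1 Hk2].
  rewrite /platform in Hlt.
  have Hne : i <> xcrit n lam beta i by move=> E; rewrite -E ltnn in Hlt.
  have Hbn := carrel_le_n Hc.
  exists i, (xcrit n lam beta i); split => //; try lia.
  move=> y Hy1 Hy2 Hy3; apply: Hk2.
  have Hlo : carrel_lo n lam i < xcrit n lam beta i by lia.
  have Hhi : xcrit n lam beta i <= carrel_hi n lam i by lia.
  have := carrel_same Hp Hc Hlo Hhi Hy1 Hy2 Hy3.
  lia.
Qed.

Definition Tp (x0 y0 : nat) (b : nat -> nat) c := if c == x0 then y0 else b c.-1.
Definition inprof x0 y0 x1 (b : nat -> nat) c r :=
  [/\ x0 <= c, c <= x1, Tp x0 y0 b c <= r & r <= b c].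
Definition validp x0 y0 x1 (b : nat -> nat) :=
  [/\ x0 <= x1, 1 <= y0, y0 <= b x0 & forall c, x0 <= c -> c < x1 -> b c <= b c.+1].

Lemma validp_mono x0 y0 x1 b c c' : validp x0 y0 x1 b ->
  x0 <= c -> c <= c' -> c' <= x1 -> b c <= b c'.
Proof.
case=> _ _ _ Hm H1; elim: c' => [|c' IH] H2 H3; first by have -> : c = 0 by lia.
case: (ltnP c c'.+1) => H.
- apply: leq_trans (IH ltac:(lia) ltac:(lia)) (Hm c' ltac:(lia) ltac:(lia)).
- by have -> : c'.+1 = c by lia.
Qed.

Lemma Tp_le_b x0 y0 x1 b c : validp x0 y0 x1 b -> x0 <= c -> c <= x1 -> Tp x0 y0 b c <= b c.
Proof.
move=> Hv H1 H2; rewrite /Tp; case: (eqVneq c x0) => [E|Hne]; first by rewrite E; case: Hv.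
case: Hv => _ _ _ Hm; have := Hm c.-1 ltac:(lia) ltac:(lia).
by have -> : c.-1.+1 = c by lia.
Qed.

Lemma Tp_ge_y0 x0 y0 x1 b c : validp x0 y0 x1 b -> x0 <= c -> c <= x1 -> y0 <= Tp x0 y0 b c.
Proof.
move=> Hv H1 H2; rewrite /Tp; case: (eqVneq c x0) => [E|Hne] //.
have Ha : x0 <= c.-1 by lia.
have Hb : c.-1 <= x1 by lia.
have := validp_mono Hv (leqnn x0) Ha Hb.
case: Hv => _ _ Hy _; lia.
Qed.

Lemma inprof_le_end x0 y0 x1 b c r : validp x0 y0 x1 b -> inprof x0 y0 x1 b c r -> r <= b x1.
Proof. move=> Hv [H1 H2 H3 H4]; have := validp_mono Hv H1 H2 (leqnn x1); lia. Qed.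

Lemma extract s p : path lstep p s -> all (fun q => 1 <= q.2) (p :: s) ->
  exists b, [/\ validp p.1 p.2 (last p s).1 b, b (last p s).1 = (last p s).2 &
    forall c r, (c, r) \in p :: s <-> inprof p.1 p.2 (last p s).1 b c r].
Proof.
elim: s p => [|p' s IH] [x0 y0] /=.
- move=> _ /andP [Hy _]; exists (fun _ => y0); split => //.
  move=> c r; rewrite inE /inprof /Tp; split.
  + move/eqP => [-> ->]; rewrite eqxx; split; lia.
  + move=> [H1 H2]; have -> : c = x0 by lia. rewrite eqxx => H3 H4.
    apply/eqP; congr pair; lia.
- move=> /andP [Hst Hp] /andP [Hy Hall].
  have [b [Hv Hb Hm]] := IH p' Hp Hall.
  case: p' Hst Hp Hall Hv Hb Hm => x1 y1 Hst Hp Hall Hv Hb Hm /=.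
  move: Hst; rewrite /lstep /= => /orP [/eqP [E1 E2]|/eqP [E1 E2]]; subst x1 y1.
  +
    exists (fun c => if c == x0 then y0 else b c).
    case: Hv => /= Hv1 Hv2 Hv3 Hv4.
    split.
    * split; [simpl; lia| done| by rewrite eqxx|].
      move=> c H1 H2; case: (eqVneq c x0) => [E|Hne].
      -- have E2 : (c.+1 == x0) = false by apply/negbTE; lia.
         by rewrite E2 E.
      -- have E2 : (c.+1 == x0) = false by apply/negbTE; lia.
         rewrite E2 ?(negbTE Hne); apply: Hv4; simpl in *; lia.
    * simpl. rewrite (_ : ((last (x0.+1, y0) s).1 == x0) = false) //.
      apply/negbTE; lia.
    * move=> c r; rewrite inE; split.
      -- case/orP => [/eqP [-> ->]|/Hm [H1 H2 H3 H4]].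
         ++ rewrite /inprof /Tp eqxx; split; lia.
         ++ rewrite /inprof /Tp /= in H1 H2 H3 H4 *.
            have Hc : (c == x0) = false by apply/negbTE; lia.
            rewrite Hc; split; try lia.
            move: H3; case: eqP => [E|Hne]; first by rewrite E /= eqxx.
            rewrite (_ : (c.-1 == x0) = false) //; apply/negbTE; lia.
      -- rewrite /inprof /Tp => [[H1 H2 H3 H4]].
         case: (eqVneq c x0) => [E|Hne].
         ++ subst c; move: H3 H4; rewrite eqxx => H3 H4.
            apply/orP; left; apply/eqP; congr pair; lia.
         ++ apply/orP; right; apply/Hm; rewrite /inprof /Tp /=.
            move: H3 H4; rewrite (negbTE Hne) => H3 H4.
            split; try lia.
            case: eqP => [E|Hne2]; first by move: H3; rewrite E /= eqxx.
            move: H3; rewrite (_ : (c.-1 == x0) = false) //; apply/negbTE; lia.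
  +
    exists b; case: Hv => /= Hv1 Hv2 Hv3 Hv4.
    split => //.
    * split => //=; lia.
    * move=> c r; rewrite inE; split.
      -- case/orP => [/eqP [-> ->]|/Hm [H1 H2 H3 H4]].
         ++ rewrite /inprof /Tp eqxx; split; lia.
         ++ rewrite /inprof /Tp /= in H3 *; split => //.
            move: H3; case: eqP => //; lia.
      -- rewrite /inprof /Tp /= => [[H1 H2 H3 H4]].
         case: (eqVneq r y0) => [Er|Hr].
         ++ move: H3; case: eqP => [Ec|Hc] H3.
            ** apply/orP; left; apply/eqP; congr pair; lia.
            ** apply/orP; right; apply/Hm; rewrite /inprof /Tp /=.
               move/eqP/negbTE: Hc => ->; split => //.
         ++ apply/orP; right; apply/Hm; rewrite /inprof /Tp /=; split => //.
            move: H3; case: eqP => //; lia.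
Qed.

Fixpoint colseg (x y d : nat) : seq (nat * nat) :=
  (x, y) :: (if d is d'.+1 then colseg x y.+1 d' else [::]).

Fixpoint mk (b : nat -> nat) (x y k : nat) : seq (nat * nat) :=
  colseg x y (b x - y) ++ (if k is k'.+1 then mk b x.+1 (b x) k' else [::]).

Lemma colseg_mem x y d c r : (c, r) \in colseg x y d <-> c = x /\ y <= r <= y + d.
Proof.
elim: d y => [|d IH] y /=.
- rewrite inE; split; [move/eqP => [-> ->]; split => //; lia| move=> [-> H]; apply/eqP; congr pair; lia].
- rewrite inE; split.
  + case/orP => [/eqP [-> ->]|H]; first by split => //; lia.
    have [-> H'] := (IH y.+1).1 H; split => //; lia.
  + move=> [Ec H]; case: (eqVneq r y) => [Er|Hr]; first by rewrite Ec Er eqxx.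
    apply/orP; right; apply: (IH y.+1).2; split => //; lia.
Qed.

Lemma colseg_path x y d : exists rest, colseg x y d = (x, y) :: rest /\
  path lstep (x, y) rest /\ last (x, y) rest = (x, y + d).
Proof.
elim: d y => [|d IH] y /=; first by exists [::]; rewrite addn0.
have [rest [E [Hp Hl]]] := IH y.+1.
exists (colseg x y.+1 d); split => //; rewrite E /= Hp Hl /lstep /= eqxx orbT.
split => //; congr pair; lia.
Qed.

Lemma mk_path b x y k : y <= b x -> (forall c, x <= c -> c < x + k -> b c <= b c.+1) ->
  exists rest, mk b x y k = (x, y) :: rest /\
  path lstep (x, y) rest /\ last (x, y) rest = (x + k, b (x + k)).
Proof.
elim: k x y => [|k IH] x y Hy Hm /=.
- have [rest [E [Hp Hl]]] := colseg_path x y (b x - y).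
  exists rest; rewrite cats0 E; split => //; split => //; rewrite Hl addn0; congr pair; lia.
- have [rest [E [Hp Hl]]] := colseg_path x y (b x - y).
  have [rest' [E' [Hp' Hl']]] := IH x.+1 (b x) (Hm x ltac:(lia) ltac:(lia))
     (fun c H1 H2 => Hm c ltac:(lia) ltac:(lia)).
  exists (rest ++ mk b x.+1 (b x) k); rewrite E /=; split => //.
  rewrite cat_path last_cat Hp Hl E' /= Hp' Hl' /lstep /=.
  have -> : y + (b x - y) = b x by lia.
  rewrite eqxx /=; split => //; congr pair; [lia| congr b; lia].
Qed.

Lemma mk_mem b x y k c r : y <= b x -> (forall c, x <= c -> c < x + k -> b c <= b c.+1) ->
  (c, r) \in mk b x y k <-> inprof x y (x + k) b c r.
Proof.
elim: k x y => [|k IH] x y Hy Hm /=; rewrite mem_cat.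
- rewrite orbF /inprof /Tp addn0; split.
  + move/colseg_mem => [-> H]; rewrite eqxx; split; lia.
  + move=> [H1 H2]; have Ec : c = x by lia. rewrite Ec eqxx => H3 H4.
    apply/colseg_mem; split => //; lia.
- have IH' := IH x.+1 (b x) (Hm x ltac:(lia) ltac:(lia))
     (fun c H1 H2 => Hm c ltac:(lia) ltac:(lia)) .
  split.
  + case/orP => [/colseg_mem H|/IH' [H1 H2 H3 H4]].
    * move: H => [-> H]; rewrite /inprof /Tp eqxx; split; lia.
    * rewrite /inprof /Tp; move: H3; rewrite /Tp.
      have Hc : (c == x) = false by apply/negbTE; lia.
      rewrite Hc; case: eqP => [E|Hne] H3; split; try lia.
      by rewrite E.
  + rewrite /inprof /Tp => [[H1 H2 H3 H4]].
    case: (eqVneq c x) => [E|Hne].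
    * apply/orP; left; apply/colseg_mem; subst c; move: H3; rewrite eqxx => H3; split => //; lia.
    * apply/orP; right; apply/IH'; rewrite /inprof /Tp.
      move: H3; rewrite (negbTE Hne) => H3; split; try lia.
      case: eqP => [E|_] //; move: H3; rewrite E /=; lia.
Qed.

Definition Xf n (lam : nat -> nat) k := lam k + n - k.

Lemma X_dec n lam a b : is_partition n lam -> 1 <= a -> a < b -> b <= n -> Xf n lam b < Xf n lam a.
Proof. move=> Hp H1 H2 H3; have := partition_mono Hp H1 (ltnW H2) H3; rewrite /Xf; lia. Qed.

Lemma X_le n lam a b : is_partition n lam -> 1 <= a -> a <= b -> b <= n -> Xf n lam b <= Xf n lam a.
Proof. move=> Hp H1 H2 H3; have := partition_mono Hp H1 H2 H3; rewrite /Xf; lia. Qed.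

Lemma perm_surj n pi : is_perm_n n pi -> forall k, 1 <= k <= n -> exists m, 1 <= m <= n /\ pi m = k.
Proof.
move=> [Hr Hi] k Hk.
set s := iota 1 n; set t := map pi s.
have Hs : forall m, (m \in s) = (1 <= m <= n) by move=> m; rewrite mem_iota; apply/idP/idP; lia.
have Hut : uniq t.
  rewrite map_inj_in_uniq ?iota_uniq // => a b; rewrite !Hs => Ha Hb; exact: Hi.
have Hsub : {subset t <= s} by move=> x /mapP [m Hm ->]; rewrite Hs; apply: Hr; rewrite -Hs.
have Hsz : size s <= size t by rewrite size_map.
have [_ Heq] := uniq_min_size Hut Hsub Hsz.
have : k \in t by rewrite Heq Hs.
by move/mapP => [m Hm ->]; exists m; split => //; rewrite -Hs.
Qed.

Lemma perm_inv n pi : is_perm_n n pi -> (exists2 m, 1 <= m <= n & pi m <> m) ->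
  exists m m', [/\ 1 <= m, m < m', m' <= n & pi m' < pi m].
Proof.
move=> [Hr Hi] [m0 Hm0 Hne]; apply: NNPP => Hno.
have Hmono : forall a b, 1 <= a -> a < b -> b <= n -> pi a < pi b.
  move=> a b H1 H2 H3; case: (ltngtP (pi a) (pi b)) => // H.
  - by exfalso; apply: Hno; exists a, b; split.
  - by have := Hi a b ltac:(lia) ltac:(lia) H; lia.
have Hlo : forall m, 1 <= m -> m <= n -> m <= pi m.
  elim=> [|m IH] // H1 H2; case: (posnP m) => [->|Hm]; first by have := Hr 1 ltac:(lia); lia.
  have := IH Hm ltac:(lia); have := Hmono m m.+1 Hm (ltnSn m) H2; lia.
have Hhi : forall d m, m + d = n -> 1 <= m -> pi m <= m.
  elim=> [|d IH] m Hd H1; first by have := Hr m ltac:(lia); lia.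
  have := IH m.+1 ltac:(lia) ltac:(lia); have := Hmono m m.+1 H1 (ltnSn m) ltac:(lia); lia.
apply: Hne; have := Hlo m0 ltac:(lia) ltac:(lia); have := Hhi (n - m0) m0 ltac:(lia) ltac:(lia); lia.
Qed.

Definition prof_family n lam beta pi (B : nat -> nat -> nat) :=
  (forall m, 1 <= m <= n -> validp (n - m) m (Xf n lam (pi m)) (B m) /\
                           B m (Xf n lam (pi m)) = beta (pi m)) /\
  (forall m m', 1 <= m <= n -> 1 <= m' <= n -> m <> m' -> forall c r,
     inprof (n - m) m (Xf n lam (pi m)) (B m) c r ->
     ~ inprof (n - m') m' (Xf n lam (pi m')) (B m') c r).

Lemma order_lem n lam beta pi B : prof_family n lam beta pi B ->
  forall m m', 1 <= m -> m < m' -> m' <= n -> forall c,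
  n - m <= c -> c <= Xf n lam (pi m) -> c <= Xf n lam (pi m') ->
  B m c < Tp (n - m') m' (B m') c.
Proof.
move=> [Hv Hd] m m' H1 H2 H3.
have [Vm _] := Hv m ltac:(lia).
have [Vm' _] := Hv m' ltac:(lia).
have sep : forall c, n - m <= c -> c <= Xf n lam (pi m) -> c <= Xf n lam (pi m') ->
    Tp (n - m) m (B m) c <= Tp (n - m') m' (B m') c -> B m c < Tp (n - m') m' (B m') c.
  move=> c Ha Hb Hc Ht; rewrite ltnNge; apply/negP => Hge.
  apply: (Hd m m' ltac:(lia) ltac:(lia) ltac:(lia) c (Tp (n - m') m' (B m') c)).
  - split => //.
  - split => //; first lia. apply: (Tp_le_b Vm'); lia.
move=> c Hc; move Hdd: (c - (n - m)) => d; elim: d c Hc Hdd => [|d IH] c Hc Hdd Hc1 Hc2.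
- apply: sep => //.
  have -> : c = n - m by lia.
  have E : Tp (n - m) m (B m) (n - m) = m by rewrite /Tp eqxx.
  rewrite E.
  have Ha : n - m' <= n - m by lia.
  have Hb : n - m <= Xf n lam (pi m') by lia.
  have := Tp_ge_y0 Vm' Ha Hb; lia.
- have IH' := IH c.-1 ltac:(lia) ltac:(lia) ltac:(lia) ltac:(lia).
  apply: sep => //.
  have E1 : (c == n - m) = false by apply/negbTE; lia.
  have E2 : (c == n - m') = false by apply/negbTE; lia.
  rewrite /Tp E1 E2.
  have Ha : n - m' <= c.-1 by lia.
  have Hb : c.-1 <= Xf n lam (pi m') by lia.
  have := Tp_le_b Vm' Ha Hb.
  lia.
Qed.

Lemma P1_main n lam beta pi B : 0 < n -> is_partition n lam -> is_upper_tuple n beta ->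
  is_perm_n n pi -> prof_family n lam beta pi B ->
  (exists m m', [/\ 1 <= m, m < m', m' <= n & pi m' < pi m]) -> Dcond n lam beta.
Proof.
move=> Hn Hp Hu Hpi Hf [m0 [m0' [I1 I2 I3 I4]]].
have [Hv Hd] := Hf.
have [Hr Hi] := Hpi.
have Hord := order_lem Hf.
suff: forall N k, n - k < N -> (exists m m', [/\ 1 <= m, m < m', m' <= n, pi m = k & pi m' < k]) ->
  Dcond n lam beta.
  move=> H; apply: (H (n - pi m0).+1 (pi m0)) => //; exists m0, m0'; split => //.
elim=> [|N IH] k HN [ms [Q [J1 J2 J3 J4 J5]]]; first lia.
case: (classic (exists y m1 m2, k < y /\ [/\ 1 <= m1, m1 < m2, m2 <= n, pi m1 = y & pi m2 < y])).
  move=> [y [m1 [m2 [Hky [K1 K2 K3 K4 K5]]]]].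
  apply: (IH y); last by exists m1, m2; split.
  have := Hr m1 ltac:(lia); lia.
move=> Hno.
have Hkr := Hr ms ltac:(lia).
have HQr := Hr Q ltac:(lia).
set j := pi Q in J5 HQr.
have [Vms Ems] := Hv ms ltac:(lia). rewrite J4 in Vms Ems.
have [VQ EQ] := Hv Q ltac:(lia).
have Hxj : Xf n lam k < Xf n lam j by apply: X_dec => //; lia.
have Hms_start : n - ms <= Xf n lam k by case: Vms.
have Hk0 : beta k < Tp (n - Q) Q (B Q) (Xf n lam k).
  have := Hord ms Q J1 J2 J3 (Xf n lam k) Hms_start; rewrite J4 Ems => H.
  apply: H => //; exact: ltnW Hxj.
exists j, k; split => //; try lia.
- have H1 : n - Q <= Xf n lam k by lia.
  have H2 : Xf n lam k <= Xf n lam (pi Q) by rewrite -/j; lia.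
  have := Tp_le_b VQ H1 H2.
  have := validp_mono VQ H1 (ltnW Hxj) (leqnn _).
  rewrite /j EQ -/j; lia.
-
  have Hchain : forall d, k + d <= n -> lam (k + d) = lam k -> exists M,
      [/\ 1 <= M <= n, (d = 0 -> pi M < k), (0 < d -> pi M = k + d),
          n - M < Xf n lam k - d & beta k + d < Tp (n - M) M (B M) (Xf n lam k - d)].
    elim=> [|d IHd] Hd1 Hd2.
    + exists Q; split => //; try lia.
      by rewrite addn0 subn0.
    + have Hl1 : lam (k + d) = lam k.
        have := partition_mono Hp (_ : 1 <= k) (_ : k <= k + d) (_ : k + d <= n).
        have := partition_mono Hp (_ : 1 <= k + d) (_ : k + d <= k + d.+1) Hd1.
        lia.
      have [M [M1 M2 M3 M4 M5]] := IHd ltac:(lia) Hl1.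
      have [M' [M'1 M'2]] := @perm_surj n pi Hpi (k + d.+1) ltac:(lia).
      have [VM EM] := Hv M M1.
      have [VM' EM'] := Hv M' M'1.
      have HpiM : pi M <= k + d by case: (posnP d) => [E|E]; [have := M2 E| have := M3 E]; lia.
      have HXM : Xf n lam k - d <= Xf n lam (pi M).
        have Hpm1 : 1 <= pi M by have := Hr M M1; lia.
        have := X_le Hp Hpm1 HpiM ltac:(lia).
        rewrite /Xf in Hl1 *; lia.
      have HXM' : Xf n lam (pi M') = Xf n lam k - d.+1.
        rewrite M'2 /Xf; rewrite /Xf in Hd2 Hkr *; lia.
      have HMM' : M < M'.
        case: (ltngtP M M') => // H.
        - exfalso; apply: Hno; exists (k + d.+1), M', M; split; first lia.
          split => //; lia.
        - by subst M'; lia.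
      have := Hord M M' ltac:(lia) HMM' ltac:(lia) (Xf n lam k - d.+1) ltac:(lia) ltac:(lia) ltac:(lia).
      have ET : Tp (n - M) M (B M) (Xf n lam k - d) = B M (Xf n lam k - d.+1).
        rewrite /Tp; have -> : (Xf n lam k - d == n - M) = false by apply/negbTE; lia.
        congr (B M); lia.
      rewrite ET in M5 => H.
      exists M'; split => //; try lia.
  move=> y Hy1 Hy2 Hy3.
  have [M [M1 M2 M3 M4 M5]] := Hchain (y - k) ltac:(lia) ltac:(by have -> : k + (y - k) = y by lia).
  have [VM EM] := Hv M M1.
  have HpM : pi M = y by have := M3 ltac:(lia); lia.
  have HX : Xf n lam y = Xf n lam k - (y - k) by rewrite /Xf in Hkr *; rewrite Hy3; lia.
  have H1 : n - M <= Xf n lam k - (y - k) by lia.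
  have H2 : Xf n lam k - (y - k) <= Xf n lam (pi M) by rewrite HpM HX.
  have := Tp_le_b VM H1 H2.
  have E : B M (Xf n lam k - (y - k)) = beta y by rewrite -HX -{1}HpM EM HpM.
  rewrite E; lia.
Unshelve. all: lia.
Qed.

Fixpoint Lf n (lam beta : nat -> nat) (f m c : nat) : nat :=
  match f with
  | 0 => beta m
  | f'.+1 => if (m < n) && (c <= Xf n lam m.+1)
             then minn (beta m) (Lf n lam beta f' m.+1 c.-1).-1 else beta m
  end.
Definition Lv n lam beta m c := Lf n lam beta (n - m) m c.
Definition Gv n lam beta t m c :=
  if (m < n) && (c <= Xf n lam m.+1) then minn t (Lv n lam beta m.+1 c.-1).-1 else t.

Lemma Lv_unfold n lam beta m c : m <= n -> Lv n lam beta m c = Gv n lam beta (beta m) m c.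
Proof.
move=> Hm; rewrite /Lv /Gv; case: (ltnP m n) => H.
- have -> : n - m = (n - m.+1).+1 by lia. by rewrite /= H.
- by have -> : n - m = 0 by lia.
Qed.

Lemma Lf_mono n lam beta f m c c' : c <= c' -> Lf n lam beta f m c <= Lf n lam beta f m c'.
Proof.
elim: f m c c' => [|f IH] m c c' Hc //=.
case: (m < n) => //=.
case E': (c' <= Xf n lam m.+1); case E: (c <= Xf n lam m.+1) => //.
- have := IH m.+1 c.-1 c'.-1 ltac:(lia); lia.
- lia.
- exact: geq_minl.
Qed.

Lemma Gv_mono n lam beta t m c c' : c <= c' -> Gv n lam beta t m c <= Gv n lam beta t m c'.
Proof.
move=> Hc; rewrite /Gv; case: (m < n) => //=.
case E': (c' <= Xf n lam m.+1); case E: (c <= Xf n lam m.+1) => //.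
- have := Lf_mono n lam beta (n - m.+1) m.+1 (_ : c.-1 <= c'.-1); rewrite /Lv; lia.
- lia.
- exact: geq_minl.
Qed.

Lemma Lv_ge n lam beta : is_upper_tuple n beta -> forall d m c, m + d = n -> 1 <= m ->
  n - m <= c -> m <= Lv n lam beta m c.
Proof.
move=> Hu; elim=> [|d IH] m c Hd H1 H2.
- rewrite /Lv; have -> : n - m = 0 by lia. by have [_ ?] := Hu m ltac:(lia).
- rewrite Lv_unfold; last lia. rewrite /Gv.
  have [_ Hb] := Hu m ltac:(lia).
  have -> : m < n by lia.
  case: (c <= _) => //=.
  have := IH m.+1 c.-1 ltac:(lia) ltac:(lia) ltac:(lia); lia.
Qed.

Lemma Gv_ge n lam beta t m c : is_upper_tuple n beta -> 1 <= m -> m <= n -> m <= t ->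
  n - m <= c -> m <= Gv n lam beta t m c.
Proof.
move=> Hu H1 H2 Ht Hc; rewrite /Gv; case: (ltnP m n) => //= Hmn.
case: (c <= _) => //=.
have := @Lv_ge n lam beta Hu (n - m.+1) m.+1 c.-1 ltac:(lia) ltac:(lia) ltac:(lia).
lia.
Qed.

Lemma Gv_le n lam beta t m c : Gv n lam beta t m c <= t.
Proof. rewrite /Gv; case: (_ && _) => //; exact: geq_minl. Qed.

Lemma Gv_end n lam beta t m c : Xf n lam m.+1 < c -> Gv n lam beta t m c = t.
Proof. move=> H; rewrite /Gv; have -> : (c <= Xf n lam m.+1) = false by lia. by rewrite andbF. Qed.

Lemma Lv_chain n lam beta l : is_partition n lam -> is_upper_tuple n beta -> 1 <= l ->
  (forall y, l < y -> y <= n -> lam y = lam l -> beta l + (y - l) < beta y) ->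
  forall d y, y + d = n -> l < y -> lam y = lam l ->
  beta l + (y - l) < Lv n lam beta y (Xf n lam y).-1.
Proof.
move=> Hp Hu Hl HB; elim=> [|d IH] y Hd H1 H2.
- rewrite /Lv; have -> : n - y = 0 by lia. by apply: HB => //; lia.
- rewrite Lv_unfold; last lia. rewrite /Gv.
  have Hyn : y < n by lia.
  rewrite Hyn /=.
  case: (leqP (Xf n lam y).-1 (Xf n lam y.+1)) => Hc; last by apply: HB => //; lia.
  have Hl2 : lam y.+1 = lam y.
    have := Hp y ltac:(lia) Hyn. move: Hc; rewrite /Xf; lia.
  have Hx : (Xf n lam y).-1.-1 = (Xf n lam y.+1).-1 by rewrite /Xf; lia.
  rewrite Hx.
  have := IH y.+1 ltac:(lia) ltac:(lia) ltac:(lia).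
  have := HB y H1 ltac:(lia) H2.
  lia.
Qed.

Definition piv j l m := if (j <= m) && (m < l) then m.+1 else if m == l then j else m.
Definition Bv n lam beta j l m c :=
  if m < j then (if c < Xf n lam m then m else beta m)
  else if m < l then (if c < Xf n lam m.+1 then m else beta m.+1)
  else if m == l then Gv n lam beta (beta j) l c
  else Lv n lam beta m c.

Lemma validp_ext x0 y0 x1 b b' : (forall c, b c = b' c) -> validp x0 y0 x1 b' -> validp x0 y0 x1 b.
Proof. move=> E [H1 H2 H3 H4]; split => //; first by rewrite E. move=> c Ha Hb; rewrite !E; exact: H4. Qed.

Lemma validE n lam (beta : nat -> nat) m k : n - m <= Xf n lam k -> 1 <= m -> m <= beta k ->
  validp (n - m) m (Xf n lam k) (fun c => if c < Xf n lam k then m else beta k).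
Proof.
move=> H1 H2 H3; split => //; first by case: ifP.
move=> c Ha Hb; rewrite Hb; case: ifP => //.
Qed.

Lemma piv_perm n j l : 1 <= j -> j < l -> l <= n -> is_perm_n n (piv j l).
Proof.
move=> H1 H2 H3; rewrite /piv; split.
- move=> m Hm.
  case: (ltnP m j) => ?; case: (ltnP m l) => ? /=; try lia; case: eqP => ?; lia.
- move=> m m' Hm Hm'.
  case: (ltnP m j) => ?; case: (ltnP m' j) => ?; case: (ltnP m l) => ?; case: (ltnP m' l) => ? /=;
  try lia; case: eqP => ?; try lia; case: eqP => ?; lia.
Qed.

Record chyp n lam beta j l : Prop := Chyp {
  c_n : 0 < n; c_p : is_partition n lam; c_u : is_upper_tuple n beta;
  c_j : 1 <= j; c_jl : j < l; c_ln : l <= n; c_bl : beta l < beta j;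
  c_max : forall t, j < t -> t < l -> beta t <= beta l;
  c_B : forall y, l < y -> y <= n -> lam y = lam l -> beta l + (y - l) < beta y;
  c_lam : 1 <= lam l }.

Lemma Gv_end2 n lam beta t m c : m <= n -> (m = n \/ Xf n lam m.+1 < c) -> Gv n lam beta t m c = t.
Proof.
move=> H [->|H']; first by rewrite /Gv ltnn.
exact: Gv_end.
Qed.

Lemma constr_valid n lam beta j l : chyp n lam beta j l -> forall m, 1 <= m <= n ->
  validp (n - m) m (Xf n lam (piv j l m)) (Bv n lam beta j l m) /\
  Bv n lam beta j l m (Xf n lam (piv j l m)) = beta (piv j l m).
Proof.
move=> [Hn Hp Hu Hj Hjl Hln Hbl Hmax HB Hlam] m /andP [Hm1 Hm2].
rewrite /piv /Bv.
case: (ltnP m j) => Hmj.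
- have -> : (m == l) = false by apply/negbTE; lia.
  have [_ Hb] := Hu m ltac:(lia).
  rewrite /=; split; last by rewrite ltnn.
  apply: validE; rewrite ?/Xf; lia.
case: (ltnP m l) => Hml.
- rewrite /=.
  have [_ Hb] := Hu m.+1 ltac:(lia).
  split; last by rewrite ltnn.
  have := partition_mono Hp (_ : 1 <= m.+1) (_ : m.+1 <= l) Hln.
  move=> Hlm.
  apply: validE; rewrite ?/Xf; lia.
- rewrite /=.
  case: eqP => [E|Ne].
  + subst m.
    have [_ Hbl'] := Hu l ltac:(lia).
    have HXj : Xf n lam l < Xf n lam j by apply: X_dec => //; lia.
    have Hend : Gv n lam beta (beta j) l (Xf n lam j) = beta j.
      apply: Gv_end2 => //; case: (ltnP l n) => H; [right| left; lia].
      have := X_dec Hp (_ : 1 <= j) (_ : j < l.+1) H; lia.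
    split => //.
    split => //; [rewrite /Xf in HXj *; lia| |].
    * apply: Gv_ge => //; lia.
    * move=> c _ _; apply: Gv_mono; lia.
  + have Hml' : l < m by lia.
    have [_ Hbm] := Hu m ltac:(lia).
    have Hend : Lv n lam beta m (Xf n lam m) = beta m.
      rewrite Lv_unfold //; apply: Gv_end2 => //; case: (ltnP m n) => H; [right| left; lia].
      have := X_dec Hp (_ : 1 <= m) (_ : m < m.+1) H; lia.
    split => //.
    split => //; [rewrite /Xf; lia| |].
    * rewrite Lv_unfold //; apply: Gv_ge => //; lia.
    * move=> c _ _; rewrite !Lv_unfold //; apply: Gv_mono; lia.
Unshelve. all: lia.
Qed.

Lemma Bv_E n lam beta j l m c : m < l -> Bv n lam beta j l m c =
  if c < Xf n lam (piv j l m) then m else beta (piv j l m).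
Proof. move=> H; rewrite /Bv /piv; case: (ltnP m j) => Hmj /=; [|by rewrite H].
have -> : (m == l) = false by apply/negbTE; lia. done. Qed.

Lemma Bv_l n lam beta j l c : j < l -> Bv n lam beta j l l c = Gv n lam beta (beta j) l c.
Proof. move=> H; rewrite /Bv; have -> : l < j = false by lia. by rewrite ltnn eqxx. Qed.

Lemma Bv_gt n lam beta j l m c : j < l -> l < m -> Bv n lam beta j l m c = Lv n lam beta m c.
Proof.
move=> H1 H2; rewrite /Bv; have -> : m < j = false by lia.
have -> : m < l = false by lia. have -> : (m == l) = false by apply/negbTE; lia. done.
Qed.

Lemma piv_lt j l m : m < l -> 1 <= m -> m <= piv j l m <= m.+1.
Proof. move=> H1 H2; rewrite /piv; case: ifP => _; first lia. have -> : (m == l) = false by apply/negbTE; lia. lia. Qed.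

Lemma piv_l j l : piv j l l = j.
Proof. by rewrite /piv ltnn andbF eqxx. Qed.

Lemma piv_gt j l m : l < m -> piv j l m = m.
Proof. move=> H; rewrite /piv; have -> : m < l = false by lia. have -> : (m == l) = false by apply/negbTE; lia. by rewrite andbF. Qed.

Lemma piv_mono_lt j l m m' : m < m' -> m' < l -> piv j l m < piv j l m'.
Proof.
move=> H1 H2; rewrite /piv.
have -> : (m == l) = false by apply/negbTE; lia.
have -> : (m' == l) = false by apply/negbTE; lia.
have -> : (m < l) = true by lia.
rewrite H2 !andbT.
case: (ltnP m j) => ?; case: (ltnP m' j) => ? /=; lia.
Qed.

Lemma sep_consec n lam beta j l p c : chyp n lam beta j l -> l <= p -> p < n ->
  n - p <= c -> c <= Xf n lam p.+1 ->
  Bv n lam beta j l p c < Lv n lam beta p.+1 c.-1.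
Proof.
move=> [Hn Hp Hu Hj Hjl Hln Hbl Hmax HB Hlam] H1 H2 H3 H4.
have HL := @Lv_ge n lam beta Hu (n - p.+1) p.+1 c.-1 ltac:(lia) ltac:(lia) ltac:(lia).
have Hg : forall t, Gv n lam beta t p c < Lv n lam beta p.+1 c.-1.
  move=> t; rewrite /Gv H2 H4 /=.
  have := geq_minr t (Lv n lam beta p.+1 c.-1).-1; lia.
case: (eqVneq p l) => [E|Ne].
- subst p; rewrite Bv_l //.
- rewrite Bv_gt; [|lia|lia]. rewrite Lv_unfold; [exact: Hg| lia].
Qed.

Lemma sep_chain n lam beta j l m c : chyp n lam beta j l -> l <= m ->
  forall m', m < m' -> m' <= n -> n - m <= c -> c <= Xf n lam m' ->
  Bv n lam beta j l m c < Lv n lam beta m' c.-1.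
Proof.
move=> H Hlm; have [Hn Hp Hu Hj Hjl Hln Hbl Hmax HB Hlam] := H.
elim=> [|m' IH] H1 H2 H3 H4; first lia.
case: (eqVneq m' m) => [E|Ne].
- subst m'; apply: sep_consec => //; lia.
- have HX : Xf n lam m'.+1 < Xf n lam m' by apply: X_dec => //; lia.
  have IH' := IH ltac:(lia) ltac:(lia) H3 ltac:(lia).
  have Hmono : Lv n lam beta m' c.-1 <= Lv n lam beta m' c by apply: Lf_mono; lia.
  have Hs := sep_consec H (_ : l <= m') (_ : m' < n) (_ : n - m' <= c) H4.
  rewrite Bv_gt in Hs; [|lia|lia].
  lia.
Unshelve. all: lia.
Qed.

Lemma sepB n lam beta j l m m' c : chyp n lam beta j l -> 1 <= m -> m < m' -> m' <= n ->
  n - m <= c -> c <= Xf n lam (piv j l m) -> c <= Xf n lam (piv j l m') ->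
  Bv n lam beta j l m c < Tp (n - m') m' (Bv n lam beta j l m') c.
Proof.
move=> H H1 H2 H3 H4 H5 H6; have [Hn Hp Hu Hj Hjl Hln Hbl Hmax HB Hlam] := H.
have ETp : Tp (n - m') m' (Bv n lam beta j l m') c = Bv n lam beta j l m' c.-1.
  by rewrite /Tp; have -> : (c == n - m') = false by apply/negbTE; lia.
rewrite ETp.
case: (ltnP m' l) => Hm'l.
-
  have Hpp := piv_mono_lt j H2 Hm'l.
  have Hpm := piv_lt j (_ : m < l) H1.
  have Hpm' := piv_lt j Hm'l (_ : 1 <= m').
  have HX : Xf n lam (piv j l m') < Xf n lam (piv j l m) by apply: X_dec => //; lia.
  rewrite !Bv_E; [|lia|lia].
  have -> : c < Xf n lam (piv j l m) by lia.
  have -> : c.-1 < Xf n lam (piv j l m') by lia.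
  lia.
case: (eqVneq m' l) => [E|Ne].
- subst m'; rewrite Bv_l // Bv_E //.
  have Hpm := piv_lt j H2 H1.
  have HGl : l <= Gv n lam beta (beta j) l c.-1.
    have [_ ?] := Hu l ltac:(lia).
    apply: Gv_ge => //; lia.
  case: ifP => Hc; first lia.
  have Ec : c = Xf n lam (piv j l m) by lia.
  case: (ltnP m j) => Hmj.
  + exfalso. move: H6; rewrite piv_l.
    have Epm : piv j l m = m.
      rewrite /piv; case: ifP => ?; first lia. case: eqP => ?; lia.
    rewrite Ec Epm.
    have Hm1 : 1 <= m by lia.
    have Hjn : j <= n by lia.
    have := X_dec Hp Hm1 Hmj Hjn; lia.
  have Epm : piv j l m = m.+1.
    rewrite /piv; case: ifP => ?; lia.
  rewrite Epm in Ec *.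
  have Hbt : beta m.+1 < beta j.
    case: (ltnP m.+1 l) => Ht; first by have := Hmax m.+1 ltac:(lia) Ht; lia.
    have -> : m.+1 = l by lia. done.
  rewrite /Gv; case: ifP => // /andP [Hl1 Hc1].
  have Emt : m.+1 = l /\ lam l.+1 = lam l.
    have := partition_mono Hp (_ : 1 <= m.+1) (_ : m.+1 <= l.+1) Hl1.
    have := partition_mono Hp (_ : 1 <= l) (_ : l <= l.+1) Hl1.
    have := partition_mono Hp (_ : 1 <= m.+1) (_ : m.+1 <= l) Hln.
    move: Hc1; rewrite Ec /Xf; lia.
  case: Emt => Emt Hll.
  have Hch := @Lv_chain n lam beta l Hp Hu (_ : 1 <= l) HB (n - l.+1) l.+1 ltac:(lia) ltac:(lia) Hll.
  have Hx : c.-1.-1 = (Xf n lam l.+1).-1 by rewrite Ec Emt /Xf; lia.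
  rewrite Hx; rewrite Emt in Hbt *.
  have := geq_minl (beta j) (Lv n lam beta l.+1 (Xf n lam l.+1).-1).-1.
  have := geq_minr (beta j) (Lv n lam beta l.+1 (Xf n lam l.+1).-1).-1.
  rewrite /minn; case: ifP; lia.
- have Hlm' : l < m' by lia.
  rewrite (Bv_gt _ _ _ _ Hjl Hlm').
  case: (ltnP m l) => Hml.
  + have Hpm := piv_lt j Hml H1.
    rewrite Bv_E //.
    have HX : Xf n lam m' < Xf n lam (piv j l m) by apply: X_dec => //; lia.
    rewrite piv_gt // in H6.
    have -> : c < Xf n lam (piv j l m) by lia.
    have := @Lv_ge n lam beta Hu (n - m') m' c.-1 ltac:(lia) ltac:(lia) ltac:(lia).
    lia.
  + rewrite piv_gt // in H6.
    apply: sep_chain => //.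
Unshelve. all: lia.
Qed.

Lemma D_chyp n lam beta : 0 < n -> is_partition n lam -> is_upper_tuple n beta ->
  Dcond n lam beta -> exists j l, chyp n lam beta j l.
Proof.
move=> Hn Hp Hu [i [l [H1 H2 H3 H4 HB]]].
have Hlam : 1 <= lam l.
  case: (posnP (lam l)) => // H0; exfalso.
  have [Hbi _] := Hu i ltac:(lia).
  have [_ Hbl] := Hu l ltac:(lia).
  case: (ltnP l n) => Hln.
  - have := partition_mono Hp (_ : 1 <= l) (ltnW Hln) (leqnn n).
    move=> Hlamn.
    have [Hbn _] := Hu n ltac:(lia).
    have := HB n Hln (leqnn n) ltac:(lia); lia.
  - lia.
set P := fun t => [&& i <= t, t < l & beta l < beta t].
have exP : exists t, P t by exists i; rewrite /P; apply/and3P; split => //; lia.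
have ubP : forall t, P t -> t <= l by move=> t /and3P [? ? ?]; lia.
case: (ex_maxnP exP ubP) => j /and3P [Hj1 Hj2 Hj3] Hjmax.
exists j, l; split => //; try lia.
move=> t Ht1 Ht2; rewrite leqNgt; apply/negP => Ht3.
have : P t by rewrite /P; apply/and3P; split => //; lia.
move/Hjmax; lia.
Unshelve. all: lia.
Qed.

Lemma D_not_nonperm n lam beta : 0 < n -> is_partition n lam -> is_upper_tuple n beta ->
  Dcond n lam beta -> ~ nonpermutable n lam beta.
Proof.
move=> Hn Hp Hu HD Hnp.
have [j [l H]] := D_chyp Hn Hp Hu HD.
have [_ _ _ Hj Hjl Hln _ _ _ _] := H.
have Hv := constr_valid H.
apply: (Hnp (piv j l)).
- exact: piv_perm.
- exists j; first lia. rewrite /piv; have -> : (j <= j) && (j < l) = true by lia. lia.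
exists (fun m => mk (Bv n lam beta j l m) (n - m) m (Xf n lam (piv j l m) - (n - m))).
have Hmk : forall m, 1 <= m <= n -> forall c r,
    (c, r) \in mk (Bv n lam beta j l m) (n - m) m (Xf n lam (piv j l m) - (n - m)) <->
    inprof (n - m) m (Xf n lam (piv j l m)) (Bv n lam beta j l m) c r.
  move=> m Hm c r; have [[V1 V2 V3 V4] _] := Hv m Hm.
  have E : n - m + (Xf n lam (piv j l m) - (n - m)) = Xf n lam (piv j l m) by lia.
  have Hm' : forall c', n - m <= c' -> c' < n - m + (Xf n lam (piv j l m) - (n - m)) ->
      Bv n lam beta j l m c' <= Bv n lam beta j l m c'.+1.
    move=> c' H1 H2; apply: V4; lia.
  have := mk_mem c r V3 Hm'. by rewrite E.
split.
- move=> m Hm; have [Vv Eend] := Hv m Hm; have [V1 V2 V3 V4] := Vv.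
  have Hm' : forall c, n - m <= c -> c < n - m + (Xf n lam (piv j l m) - (n - m)) ->
      Bv n lam beta j l m c <= Bv n lam beta j l m c.+1.
    move=> c H1 H2; apply: V4; lia.
  have [rest [E1 [E2 E3]]] := mk_path V3 Hm'.
  have E : n - m + (Xf n lam (piv j l m) - (n - m)) = Xf n lam (piv j l m) by lia.
  rewrite E1 /=; split => //.
  + rewrite /lattice_path E2 /=.
    apply/andP; split; first lia.
    apply/allP => [[c r]] Hin.
    have : (c, r) \in mk (Bv n lam beta j l m) (n - m) m (Xf n lam (piv j l m) - (n - m)).
      by rewrite E1 inE Hin orbT.
    move/(Hmk m Hm) => [I1 I2 I3 I4].
    have := Tp_ge_y0 Vv I1 I2.
    rewrite /=; lia.
  + rewrite E3 E Eend /terminal /Xf //.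
- move=> m m' Hm Hm' Hne [c r] Hin; apply/negP => Hin'.
  move/(Hmk m Hm): Hin => I; move/(Hmk m' Hm'): Hin' => I'.
  case: (ltngtP m m') => Hmm'.
  + have [A1 A2 A3 A4] := I; have [B1 B2 B3 B4] := I'.
    have := sepB H (_ : 1 <= m) Hmm' (_ : m' <= n) A1 A2 B2; lia.
  + have [A1 A2 A3 A4] := I; have [B1 B2 B3 B4] := I'.
    have := sepB H (_ : 1 <= m') Hmm' (_ : m <= n) B1 B2 A2; lia.
  + by apply: Hne.
Unshelve. all: lia.
Qed.

Lemma notD_nonperm n lam beta : 0 < n -> is_partition n lam -> is_upper_tuple n beta ->
  ~ Dcond n lam beta -> nonpermutable n lam beta.
Proof.
move=> Hn Hp Hu HnD pi Hpi Hne [Lam [HL HD]]; apply: HnD.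
have Hex : forall m, exists b : nat -> nat, 1 <= m <= n ->
    (validp (n - m) m (Xf n lam (pi m)) b /\ b (Xf n lam (pi m)) = beta (pi m)) /\
    (forall c r, (c, r) \in Lam m <-> inprof (n - m) m (Xf n lam (pi m)) b c r).
  move=> m; case: (boolP (1 <= m <= n)) => Hm; last by exists (fun _ => 0).
  have [Hlp Hh Hl] := HL m Hm.
  move: Hlp Hh Hl; case: (Lam m) => [|p s] //= /andP [Hpath Hall] Hh Hl.
  subst p.
  have [b [V1 V2 V3]] := extract Hpath Hall.
  rewrite Hl /terminal /= in V1 V2 V3.
  by exists b.
pose B := fun m => proj1_sig (constructive_indefinite_description _ (Hex m)).
have HB : forall m, 1 <= m <= n ->
    (validp (n - m) m (Xf n lam (pi m)) (B m) /\ B m (Xf n lam (pi m)) = beta (pi m)) /\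
    (forall c r, (c, r) \in Lam m <-> inprof (n - m) m (Xf n lam (pi m)) (B m) c r).
  move=> m Hm; rewrite /B; case: (constructive_indefinite_description _ _) => b Hb /=.
  exact: Hb.
apply: (P1_main (pi := pi) (B := B)) => //.
- split; first by move=> m Hm; exact: (proj1 (HB m Hm)).
  move=> m m' Hm Hm' Hne' c r I I'.
  have Hin := (proj2 ((proj2 (HB m Hm)) c r)) I.
  have Hin' := (proj2 ((proj2 (HB m' Hm')) c r)) I'.
  by move: (HD m m' Hm Hm' Hne' _ Hin); rewrite Hin'.
- exact: perm_inv.
Qed.

Theorem main n lam beta : 0 < n -> is_partition n lam -> is_upper_tuple n beta ->
  (nonpermutable n lam beta <-> gapless_core n lam beta /\ bounded_by_platform n lam beta).
Proof.
move=> Hn Hp Hu; split.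
- move=> Hnp; apply: notD_cond => // HD; exact: D_not_nonperm Hnp.
- move=> [Hg Hb]; apply: notD_nonperm => //; exact: cond_notD.
Qed.


Unset Implicit Arguments.

Theorem theorem5p1 (n : nat) (lam beta : nat -> nat) :
  0 < n -> is_partition n lam -> is_upper_tuple n beta ->
  (nonpermutable n lam beta <->
   gapless_core n lam beta /\ bounded_by_platform n lam beta).
Proof. exact: main. Qed.
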